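(* Let $\widehat{\mathbf M}\otimes\mathcal A_\psi$ be the product of a gMDP $\widehat{\mathbf M}$ (state space $\hat{\mathbb X}$, input space $\hat{\mathbb U}$) with the DFA $\mathcal A_\psi=(Q,q_0,\Sigma,F,\tau)$, let $\delta\ge 0$, let $\mu$ be a stationary Markov policy, and let $I$ be an absorbing set for $\mu$. Then every function $V:\hat{\mathbb X}\times Q\to[0,1]$ satisfies, for all integers $l\ge1$, $$0\le(\mathbf T^\mu_\delta)^l(V)(\hat x,q)\le\mathbf L(\|V\|_\infty-l\delta)\qquad\forall(\hat x,q)\in I.$$ In particular, if $\delta>0$ then $(\mathbf T^\mu_\delta)^l(V)(\hat x,q)=0$ for all $(\hat x,q)\in I$ and all $l\ge1/\delta$.
   Context: A gMDP $\widehat{\mathbf M}=(\hat{\mathbb X},\hat{\mathbb U},\mathbb Y,\hat x_0,\hat{\mathbf t},\hat h)$: Polish state/input spaces, metric output space $\mathbb Y$, kernel $\hat{\mathbf t}(\cdot\mid\hat x,\hat u)$, measurable output map $\hat h$. $\Sigma=2^{\mathsf{AP}}$, $\mathsf L:\mathbb Y\to\Sigma$ measurable labelling; $\mathcal A_\psi$ a DFA (accepting set $F$, transition $\tau$) for an scLTL formula $\psi$. Product $\widehat{\mathbf M}\otimes\mathcal A_\psi$: states $\hat{\mathbb X}\times Q$, inputs $\hat{\mathbb U}$, kernel $\bar{\mathbf t}(d\hat x'\times\{q'\}\mid\hat x,q,u)=\mathbf 1_{\{q'\}}(\tau(q,\mathsf L(\hat h(\hat x'))))\hat{\mathbf t}(d\hat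 x'\mid\hat x,u)$. Stationary Markov policy: universally measurable $\mu:\hat{\mathbb X}\times Q\to\mathcal P(\hat{\mathbb U})$ used at every step. $\mathbf T^\mu(V)(\hat x,q)=\int\max\{\mathbf 1_F(q'),V(\hat x',q')\}\bar{\mathbf t}(d\hat x'\times\{q'\}\mid\hat x,q,\mu(\hat x,q))$, $\mathbf T^\mu_\delta(V)=\mathbf L(\mathbf T^\mu(V)-\delta)$ with $\mathbf L(r)=\min(1,\max(0,r))$; $\|V\|_\infty=\sup|V|$. An absorbing set for $\mu$ is $I\subseteq\hat{\mathbb X}\times(Q\setminus F)$ such that, under $\mu$, $\mathbb P[(\hat x_{t+1},q_{t+1})\in I\mid(\hat x_t,q_t)]=1$ for all $(\hat x_t,q_t)\in I$. *)

(* Defs.v *)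
From HB Require Import structures.
From mathcomp Require Import all_boot all_order all_algebra.
From mathcomp Require Import all_classical all_reals all_analysis measurable_realfun.
Set Implicit Arguments. Unset Strict Implicit. Unset Printing Implicit Defensive.
Import Order.TTheory GRing.Theory Num.Theory.
Import numFieldNormedType.Exports.
Local Open Scope classical_set_scope.
Local Open Scope ring_scope.

Definition Lsat (R : realType) (r : R) : R := Num.min 1 (Num.max 0 r).

(* DFA state reached from q after the product moves to x':
   q' = tau(q, L(h(x'))).  Alphabet Sigma = 2^AP = {set AP}. *)
Definition next_q {X Y : Type} {AP Q : finType}
  (tau : Q -> {set AP} -> Q) (Lab : Y -> {set AP}) (h : X -> Y)
  (q : Q) (x' : X) : Q := tau q (Lab (h x')).

Definition Tmu {d1 d2} {X : measurableType d1} {U : measurableType d2}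
  {R : realType} {Y : Type} {AP Q : finType}
  (t : X -> U -> probability X R) (mu : X -> Q -> probability U R)
  (tau : Q -> {set AP} -> Q) (Lab : Y -> {set AP}) (h : X -> Y)
  (F : {set Q}) (V : X -> Q -> R) : X -> Q -> R :=
  fun x q => fine (\int[mu x q]_u \int[t x u]_x'
      (Num.max ((next_q tau Lab h q x' \in F)%:R)
               (V x' (next_q tau Lab h q x')))%:E)%E.

Definition Tmu_delta {d1 d2} {X : measurableType d1} {U : measurableType d2}
  {R : realType} {Y : Type} {AP Q : finType}
  (t : X -> U -> probability X R) (mu : X -> Q -> probability U R)
  (tau : Q -> {set AP} -> Q) (Lab : Y -> {set AP}) (h : X -> Y)
  (F : {set Q}) (delta : R) (V : X -> Q -> R) : X -> Q -> R :=
  fun x q => Lsat (Tmu t mu tau Lab h F V x q - delta).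

Definition supnorm {X Q : Type} {R : realType} (V : X -> Q -> R) : R :=
  sup (range (fun p : X * Q => `|V p.1 p.2|)).

(* I is an absorbing set for mu: I is contained in X x (Q \ F), and from
   every (x,q) in I the next product state lies in I with probability 1,
   i.e. int_u t(A_q | x,u) mu(du|x,q) = 1 where
   A_q = {x' | (x', tau(q, L(h x'))) in I} (required measurable so that the
   probability is defined). *)
Definition absorbing {d1 d2} {X : measurableType d1} {U : measurableType d2}
  {R : realType} {Y : Type} {AP Q : finType}
  (t : X -> U -> probability X R) (mu : X -> Q -> probability U R)
  (tau : Q -> {set AP} -> Q) (Lab : Y -> {set AP}) (h : X -> Y)
  (F : {set Q}) (I : set (X * Q)) : Prop :=
  [/\ forall p, I p -> p.2 \notin F,
      forall q, measurable [set x' | I (x', next_q tau Lab h q x')]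
    & forall x q, I (x, q) ->
        (\int[mu x q]_u (t x u [set x' | I (x', next_q tau Lab h q x')]) = 1)%E].

(* Main.v *)
Require Import Defs.
From HB Require Import structures.
From mathcomp Require Import all_boot all_order all_algebra.
From mathcomp Require Import all_classical all_reals all_analysis measurable_realfun.
Import Order.TTheory GRing.Theory Num.Theory.
Import numFieldNormedType.Exports.
Local Open Scope classical_set_scope.
Local Open Scope ring_scope.
From mathcomp Require Import lra.

Lemma le_int_nn d (T : measurableType d) (R : realType) (m : {measure set T -> \bar R})
  (f g : T -> \bar R) :
  (forall x, 0 <= f x)%E -> (forall x, f x <= g x)%E ->
  (\int[m]_x f x <= \int[m]_x g x)%E.
Proof.
move=> f0 fg.
have g0 : forall x, (0 <= g x)%E by move=> x; exact: le_trans (f0 x) (fg x).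
rewrite (ge0_integralTE m f0) (ge0_integralTE m g0) /=.
apply: ereal_sup_le => _ [h hf <-]; exists h => //= x; exact: le_trans (hf x) (fg x).
Qed.

Lemma Lsat_ge0 (R : realType) (r : R) : 0 <= Lsat r.
Proof. by rewrite /Lsat le_min ler01 le_max lexx. Qed.

Lemma Lsat_le1 (R : realType) (r : R) : Lsat r <= 1.
Proof. by rewrite /Lsat ge_min lexx. Qed.

Lemma Lsat_id (R : realType) (r : R) : 0 <= r <= 1 -> Lsat r = r.
Proof. by case/andP=> r0 r1; rewrite /Lsat max_r // min_r. Qed.

Lemma Lsat_neg (R : realType) (r : R) : r <= 0 -> Lsat r = 0.
Proof. by move=> r0; rewrite /Lsat max_l // min_r. Qed.

Lemma Lsat_mono (R : realType) (r s : R) : r <= s -> Lsat r <= Lsat s.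
Proof.
move=> rs; rewrite /Lsat le_min ge_min lexx /=.
have h : Num.max 0 r <= Num.max 0 s.
  rewrite ge_max le_max lexx /=.
  by rewrite (le_trans rs) // le_max lexx orbT.
by rewrite (le_trans _ h) ?orbT // ge_min lexx orbT.
Qed.
Lemma fine_le_c (R : realType) (e : \bar R) (c : R) :
  (e <= c%:E)%E -> 0 <= c -> fine e <= c.
Proof. by case: e => //= r; rewrite lee_fin. Qed.

Lemma Tmu_bound {d1 d2} {X : measurableType d1} {U : measurableType d2}
  {R : realType} {Y : Type} {AP Q : finType}
  (t : X -> U -> probability X R)
  (t_kernel : forall x A, measurable A ->
      measurable_fun [set: U] ((fun u => t x u A) : U -> \bar R))
  (h : X -> Y) (Lab : Y -> {set AP}) (F : {set Q}) (tau : Q -> {set AP} -> Q)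
  (mu : X -> Q -> probability U R) (I : set (X * Q))
  (hI : absorbing t mu tau Lab h F I)
  (W : X -> Q -> R) (c : R) (c0 : 0 <= c) (c1 : c <= 1)
  (hW : forall x q, 0 <= W x q <= 1)
  (hWI : forall x q, I (x, q) -> W x q <= c)
  x q : I (x, q) -> Tmu t mu tau Lab h F W x q <= c.
Proof.
case: hI => hIF hmA hint Ixq.
set A := [set x' | I (x', next_q tau Lab h q x')].
have mA : measurable A := hmA q.
have mAC : measurable (~` A) := measurableC mA.
pose g := fun x' : X => ((1 - c)%:E * (\1_(~` A) x')%:E + c%:E)%E.
have ineq x' : ((Num.max ((next_q tau Lab h q x' \in F)%:R)
    (W x' (next_q tau Lab h q x')))%:E <= g x')%E.
  rewrite /g indicE in_setC; case: (pselect (A x')) => Ax'.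
  - rewrite mem_set //=. rewrite mule0 add0e lee_fin ge_max.
    have := hIF _ Ax' => /= /negbTE ->; rewrite c0 /=.
    exact: hWI.
  - have -> : (x' \in A) = false by apply/negbTE/negP; rewrite inE.
    rewrite /= mule1 -EFinD lee_fin subrK ge_max.
    case/andP: (hW x' (next_q tau Lab h q x')) => _ ->.
    by rewrite andbT lern1 leq_b1.
have mind : measurable_fun [set: X] (fun x' => (\1_(~` A) x' : R)%:E).
  by apply/measurable_EFinP; exact: measurable_indic.
have inner u : (\int[t x u]_x' (Num.max ((next_q tau Lab h q x' \in F)%:R)
    (W x' (next_q tau Lab h q x')))%:E <= (1 - c)%:E * t x u (~` A) + c%:E)%E.
  apply: (@le_trans _ _ (\int[t x u]_x' g x')%E).
    apply: le_int_nn => // x'; rewrite lee_fin le_max.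
    by rewrite ler0n.
  rewrite /g ge0_integralD //; 
    try (by move=> x' _; rewrite mule_ge0 // lee_fin ?subr_ge0 // indicE);
    try (by apply: measurable_funeM; exact: mind).
  rewrite ge0_integralZl //; try (by rewrite lee_fin subr_ge0);
    try (by move=> x' _; rewrite lee_fin indicE).
  rewrite integral_indic // setIT.
  rewrite (integral_cst (t x u) measurableT).
  rewrite [X in (c%:E * X)%E](_ : _ = 1%E) ?mule1 //.
  exact: probability_setT.
have J0 : (\int[mu x q]_u t x u (~` A) = 0)%E.
  have e1 : (\int[mu x q]_u (t x u A + t x u (~` A)) = 1)%E.
    rewrite (eq_integral (fun _ => 1%E)); last first.
      move=> u _; rewrite -measureU //; last exact/subsets_disjoint.
      rewrite setUv; exact: probability_setT.
    rewrite (integral_cst (mu x q) measurableT).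
    rewrite [X in (1%E * X)%E](_ : _ = 1%E) ?mule1 //.
    exact: probability_setT.
  move: e1; rewrite ge0_integralD //; last first.
  - exact: t_kernel.
  - exact: t_kernel.
  rewrite hint //.
  have : (0 <= \int[mu x q]_u t x u (~` A))%E by apply: integral_ge0.
  case: (\int[mu x q]_u t x u (~` A))%E => // r r0.
  rewrite -EFinD => /eqP; rewrite eqe => /eqP e.
  by congr EFin; lra.
rewrite /Tmu; apply: fine_le_c => //.
  apply: (@le_trans _ _ (\int[mu x q]_u ((1 - c)%:E * t x u (~` A) + c%:E))%E).
    apply: le_int_nn => // u; apply: integral_ge0 => x' _.
    by rewrite lee_fin le_max ler0n.
  rewrite ge0_integralD //;
    try (by move=> x' _; rewrite mule_ge0 // lee_fin ?subr_ge0);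
    try (by apply: measurable_funeM; exact: t_kernel).
  rewrite ge0_integralZl //; try (by rewrite lee_fin subr_ge0).
  rewrite J0 mule0 add0e.
  rewrite (integral_cst (mu x q) measurableT).
  rewrite [X in (c%:E * X)%E](_ : _ = 1%E) ?mule1 //.
  exact: probability_setT.
exact: t_kernel.
Qed.

Theorem proposition7
  (d1 d2 : measure_display) (X : measurableType d1) (U : measurableType d2)
  (R : realType) (Y : Type) (AP Q : finType)
  (t : X -> U -> probability X R)
  (t_kernel : forall x A, measurable A ->
      measurable_fun [set: U] ((fun u => t x u A) : U -> \bar R))
  (h : X -> Y) (Lab : Y -> {set AP})
  (q0 : Q) (F : {set Q}) (tau : Q -> {set AP} -> Q)
  (delta : R) (hdelta : 0 <= delta)
  (mu : X -> Q -> probability U R)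
  (I : set (X * Q)) (hI : absorbing t mu tau Lab h F I)
  (V : X -> Q -> R) (hV : forall x q, 0 <= V x q <= 1) :
  (forall l : nat, (1 <= l)%N -> forall x q, I (x, q) ->
      0 <= iter l (Tmu_delta t mu tau Lab h F delta) V x q <=
           Lsat (supnorm V - l%:R * delta))
  /\
  (0 < delta -> forall l : nat, delta^-1 <= l%:R -> forall x q, I (x, q) ->
      iter l (Tmu_delta t mu tau Lab h F delta) V x q = 0).
Proof.
set s := supnorm V.
set T := Tmu_delta t mu tau Lab h F delta.
have Wb : forall l x q, 0 <= iter l T V x q <= 1.
  case=> [|l] x q /=; first exact: hV.
  by rewrite /T /Tmu_delta Lsat_ge0 Lsat_le1.
have hub : has_ubound (range (fun p : X * Q => `|V p.1 p.2|)).
  exists 1 => _ [p _ <-]; rewrite ger0_norm; case/andP: (hV p.1 p.2) => //.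
have Vs : forall x q, V x q <= s.
  move=> x q; apply: le_trans (ler_norm _) _.
  by rewrite /s /supnorm; apply: (ub_le_sup hub); exists (x, q).
have s1 : forall (x : X) (q : Q), s <= 1.
  move=> x q; rewrite /s /supnorm; apply: ge_sup; first by exists `|V x q|, (x, q).
  by move=> _ [p _ <-]; rewrite ger0_norm; case/andP: (hV p.1 p.2).
have s0 : forall (x : X) (q : Q), 0 <= s.
  by move=> x q; apply: le_trans (Vs x q); case/andP: (hV x q).
have key : forall l x q, I (x, q) -> iter l T V x q <= Lsat (s - l%:R * delta).
  elim=> [|l IH] x q Ixq.
    rewrite /= mul0r subr0 Lsat_id; first exact: Vs.
    by rewrite (s0 x q) (s1 x q).
  rewrite iterS /T /Tmu_delta.
  have hc := @Tmu_bound _ _ _ _ _ _ _ _ t t_kernel h Lab F tau mu I hI (iter l T V) _ (@Lsat_ge0 R (s - l%:R * delta))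
    (@Lsat_le1 R (s - l%:R * delta)) (Wb l) IH x q Ixq.
  have ld : 0 <= l%:R * delta by rewrite mulr_ge0.
  case: (lerP (s - l%:R * delta) 0) => hneg.
    rewrite Lsat_neg // in hc; rewrite Lsat_neg; first exact: Lsat_ge0.
    rewrite subr_le0; exact: le_trans hc hdelta.
  rewrite Lsat_id in hc; last first.
    apply/andP; split; first exact: ltW.
    by rewrite lerBlDr (le_trans (s1 x q)) // lerDl.
  apply: Lsat_mono; rewrite -addn1 natrD mulrDl mul1r.
  by rewrite opprD addrA lerD2r.
split.
  move=> l l1 x q Ixq; apply/andP; split; first by case/andP: (Wb l x q).
  exact: key.
move=> dpos l hl x q Ixq; apply/eqP; rewrite eq_le; apply/andP; split; last first.
  by case/andP: (Wb l x q).
apply: le_trans (key l x q Ixq) _; rewrite Lsat_neg //.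
have : delta * delta^-1 <= delta * l%:R by rewrite ler_wpM2l // ltW.
rewrite mulfV ?gt_eqF // => h1.
rewrite mulrC in h1; rewrite subr_le0; exact: le_trans (s1 x q) h1.
Qed.
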